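(* Let $\mathfrak{A}$ be a $(\circ,\wedge,\mathsf{A})$-algebra that is representable by partial functions. Then composition is completely right-distributive over joins: for every subset $S\subseteq\mathfrak{A}$ such that $\bigvee S$ exists and every $a\in\mathfrak{A}$, the join $\bigvee\{s\circ a\mid s\in S\}$ exists and equals $(\bigvee S)\circ a$.
   Context: A $(\circ,\wedge,\mathsf{A})$-algebra is a set with two binary operations $\circ,\wedge$ and one unary operation $\mathsf{A}$. An algebra of partial functions of this signature is a set of partial functions, with base $X$ the union of all their domains and ranges, closed under: composition $f\circ g=\{(x,z)\mid \exists y\,(x,y)\in f,(y,z)\in g\}$ (apply $f$ first, then $g$); intersection; antidomain $\mathsf{A}(f)=\{(x,x)\mid x\in X, x\notin\mathrm{dom}(f)\}$. A representation by partial functions is an isomorphism onto such an algebra; $\mathfrak{A}$ is representable if one exists. Joins and meets are taken in the order $a\le b\iff a\wedge b=a$. *)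

(* Defs.v *)
Set Implicit Arguments.
Unset Strict Implicit.

Record CMAAlgebra := {
  carrier :> Type;
  comp : carrier -> carrier -> carrier;   (* f ; g : apply f first, then g *)
  meet : carrier -> carrier -> carrier;
  antidom : carrier -> carrier
}.

Definition le {A : CMAAlgebra} (a b : A) : Prop := meet a b = a.

Definition is_join {A : CMAAlgebra} (S : A -> Prop) (j : A) : Prop :=
  (forall s, S s -> le s j) /\
  (forall u, (forall s, S s -> le s u) -> le j u).

Definition rel (X : Type) := X -> X -> Prop.

Definition is_partial_fun (X : Type) (f : rel X) : Prop :=
  forall x y z, f x y -> f x z -> y = z.

Definition base (A : CMAAlgebra) (X : Type) (h : A -> rel X) (x : X) : Prop :=
  exists a y, h a x y \/ h a y x.

Definition is_pfun_representation (A : CMAAlgebra) (X : Type) (h : A -> rel X) : Prop :=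
  (forall a, is_partial_fun (h a)) /\
  (forall a b, (forall x y, h a x y <-> h b x y) -> a = b) /\
  (forall a b x z, h (comp a b) x z <-> exists y, h a x y /\ h b y z) /\
  (forall a b x y, h (meet a b) x y <-> h a x y /\ h b x y) /\
  (forall a x y, h (antidom a) x y <->
                 (x = y /\ base h x /\ ~ (exists z, h a x z))).

Definition representable_pfun (A : CMAAlgebra) : Prop :=
  exists (X : Type) (h : A -> rel X), is_pfun_representation h.

(* Main.v *)
Require Import Defs.
From Stdlib Require Import Classical.

Section S.
Variable A : CMAAlgebra.
Variable X : Type.
Variable h : A -> rel X.
Hypothesis Hr : is_pfun_representation h.

Lemma le_iff (a b : A) : le a b <-> (forall x y, h a x y -> h b x y).
Proof.
  destruct Hr as (Hpf & Hinj & Hc & Hm & Ha). unfold le. split.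
  - intros E x y H. rewrite <- E in H. apply Hm in H. tauto.
  - intros H. apply Hinj. intros x y. rewrite Hm. split; [tauto|].
    intros H1; split; auto.
Qed.
End S.
Arguments le_iff {A X h} Hr a b.
Lemma le_app {A X h} (Hr : @is_pfun_representation A X h) {a b} : le a b -> forall x y, h a x y -> h b x y.
Proof. intro H. exact (proj1 (le_iff Hr a b) H). Qed.

Theorem mainTheorem9 (A : CMAAlgebra) (Hrep : representable_pfun A) :
  forall (S : A -> Prop) (j : A) (a : A),
    is_join S j ->
    is_join (fun t => exists s, S s /\ t = comp s a) (comp j a).
Proof.
  destruct Hrep as (X & h & Hr).
  pose proof Hr as (Hpf & Hinj & Hc & Hm & Ha).
  intros S j a [Hub Hl]. split.
  - intros t (s & Hs & ->). apply (proj2 (le_iff Hr _ _)). intros x z H.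
    apply Hc in H. destruct H as (y & H1 & H2). apply Hc. exists y. split; auto.
    apply (le_app Hr (Hub s Hs)); auto.
  - intros u Hu.
    set (e := antidom (comp j a)).
    set (g := antidom (antidom (meet (comp j a) u))).
    set (p := antidom (comp (antidom e) (antidom g))).
    assert (Hj : le j (comp p j)).
    { apply Hl. intros s Hs. apply (proj2 (le_iff Hr _ _)). intros x y Hsxy.
      assert (Hb : base h x) by (exists s, y; auto).
      apply Hc. exists x. split; [|apply (le_app Hr (Hub s Hs)); auto].
      apply Ha. split; [reflexivity|split; [exact Hb|]].
      intros (w & Hw). apply Hc in Hw. destruct Hw as (v & H1 & H2).
      apply Ha in H1. destruct H1 as (<- & _ & H1).
      apply Ha in H2. destruct H2 as (<- & _ & H2).
      destruct (classic (exists z, h (comp j a) x z)) as [(z & Hz) | Hn].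
      + apply H2. exists x. apply Ha. split; [reflexivity| split; [exact Hb|]].
        intros (w & Hw). apply Ha in Hw. destruct Hw as (_ & _ & Hw).
        apply Hw. exists z. apply Hm. split; auto.
        apply Hc in Hz. destruct Hz as (y' & Hjy & Hay).
        apply (le_app Hr (Hu (comp s a) (ex_intro _ s (conj Hs eq_refl)))).
        apply Hc. exists y'. split; auto.
        pose proof (le_app Hr (Hub s Hs) x y Hsxy) as Hjxy.
        rewrite <- (Hpf j x y y' Hjxy Hjy); auto.
      + apply H1. exists x. apply Ha. split; [reflexivity|split; [exact Hb|exact Hn]]. }
    apply (proj2 (le_iff Hr _ _)). intros x z H.
    pose proof H as H0.
    apply Hc in H. destruct H as (y & Hjy & Hay).
    apply (le_app Hr Hj) in Hjy. apply Hc in Hjy. destruct Hjy as (x' & Hp & Hj').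
    apply Ha in Hp. destruct Hp as (<- & Hb & Hp).
    apply NNPP. intros Hnu. apply Hp. exists x. apply Hc. exists x. split.
    + apply Ha. split; [reflexivity|split; [exact Hb|]].
      intros (w & Hw). apply Ha in Hw. destruct Hw as (_ & _ & Hw). apply Hw. exists z; exact H0.
    + apply Ha. split; [reflexivity|split; [exact Hb|]].
      intros (w & Hw). apply Ha in Hw. destruct Hw as (_ & _ & Hw). apply Hw.
      exists x. apply Ha. split; [reflexivity|split; [exact Hb|]].
      intros (v & Hv). apply Hm in Hv. destruct Hv as (Hv1 & Hv2).
      rewrite (Hpf _ x z v H0 Hv1) in Hnu. exact (Hnu Hv2).
Qed.
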